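(* Let $\{a_n[e^{-x}]\}_L=\{2^{-n}\}=1,\tfrac12,\tfrac14,\dots$. Then \[ \{a_n[e^{-x}]\}_L=\sum_{k=0}^{\infty}(-1)^k\{a_n[x^k/k!]\}_R , \] where for each index $n$ the (in general divergent) series $\sum_{k\ge0}(-1)^k a_n[x^k/k!]_R$ is interpreted as an Abel sum, i.e. its value is $\lim_{t\to1^-}\sum_{k\ge0}(-1)^k a_n[x^k/k!]_R\,t^k$.
   Context: Sequences are indexed by $n=0,1,2,\dots$. The right integral is $\mathcal{I}_R^0\{a_n\}=\{\sum_{j=0}^{n}a_j\}$. Define $\{a_n[x^0/0!]\}_R=\{1\}$, $\{a_n[x^1/1!]\}_R=\{n\}=0,1,2,\dots$, and for $k\ge2$, $\{a_n[x^k/k!]\}_R=(\mathcal{I}_R^0)^{k-1}\{n\}$; $a_n[x^k/k!]_R$ denotes the $n$-th term of $\{a_n[x^k/k!]\}_R$. *)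

(* Defs.v *)
From Stdlib Require Import Reals.
From Coquelicot Require Import Coquelicot.
Open Scope R_scope.

Definition sequence := nat -> R.

Definition right_integral (a : sequence) : sequence :=
  fun n => sum_f_R0 a n.

(* {a_n[x^k/k!]}_R :  k=0 -> {1};  k=1 -> {n};  k>=2 -> (I_R^0)^(k-1) {n} *)
Definition aR (k : nat) : sequence :=
  match k with
  | O => fun _ => 1
  | S k' => Nat.iter k' right_integral (fun n => INR n)
  end.

Definition aL_expneg : sequence := fun n => / 2 ^ n.

Definition abel_sum (c : nat -> R) (s : R) : Prop :=
  (forall t, 0 < t < 1 -> ex_series (fun k => c k * t ^ k)) /\
  filterlim (fun t => Series (fun k => c k * t ^ k)) (at_left 1) (locally s).

(* Main.v *)
Require Import Defs.
From Stdlib Require Import Reals Lra Lia.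
From Coquelicot Require Import Coquelicot.
Open Scope R_scope.

Lemma aR_0 : forall k, aR k 0%nat = 0 ^ k.
Proof.
  intros [|k]; [reflexivity|].
  simpl aR. rewrite pow_i by lia.
  induction k; [reflexivity|].
  change (sum_f_R0 (Nat.iter k right_integral (fun n => INR n)) 0 = 0).
  simpl. exact IHk.
Qed.

Lemma aR_pascal : forall k n, aR (S k) (S n) = aR (S k) n + aR k (S n).
Proof.
  intros [|k] n.
  - change (INR (S n) = INR n + 1). apply S_INR.
  - change (sum_f_R0 (aR (S k)) (S n) = sum_f_R0 (aR (S k)) n + aR (S k) (S n)).
    reflexivity.
Qed.

Lemma aR_sum : forall k n, aR k (S n) = sum_f_R0 (fun j => aR j n) k.
Proof.
  induction k; intros n.
  - reflexivity.
  - rewrite aR_pascal, IHk. simpl. ring.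
Qed.

Lemma aR_pos : forall n k, 0 <= aR k n.
Proof.
  induction n; intros k.
  - rewrite aR_0. destruct k; simpl; lra.
  - rewrite aR_sum. apply cond_pos_sum. auto.
Qed.

Lemma main_series : forall n x, Rabs x < 1 ->
  is_series (fun k => aR k n * x ^ k) (/ (1 - x) ^ n).
Proof.
  induction n; intros x Hx.
  - replace (/ (1 - x) ^ 0) with (/ (1 - 0)) by (simpl; f_equal; ring).
    eapply is_series_ext.
    2: { apply (is_series_geom 0). rewrite Rabs_R0; lra. }
    intros k. simpl. rewrite aR_0. destruct k; simpl; ring.
  - assert (Ha : ex_series (fun k => Rabs (aR k n * x ^ k))).
    { exists (/ (1 - Rabs x) ^ n).
      eapply is_series_ext. 2: apply IHn.
      + intros k. rewrite Rabs_mult, RPow_abs, (Rabs_right (aR k n)); auto.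
        apply Rle_ge, aR_pos.
      + rewrite Rabs_Rabsolu; auto. }
    assert (Hb : ex_series (fun k => Rabs (x ^ k))).
    { exists (/ (1 - Rabs x)).
      eapply is_series_ext. 2: apply is_series_geom.
      + intros k. rewrite RPow_abs; auto.
      + rewrite Rabs_Rabsolu; auto. }
    pose proof (is_series_mult _ _ _ _ (IHn x Hx) (is_series_geom x Hx) Ha Hb) as H.
    replace (/ (1 - x) ^ S n) with (/ (1 - x) ^ n * / (1 - x)).
    2: { simpl. rewrite Rinv_mult. ring. }
    eapply is_series_ext. 2: exact H.
    intros k. rewrite aR_sum, Rmult_comm, scal_sum.
    apply sum_eq. intros j Hj.
    rewrite Rmult_assoc, <- pow_add. f_equal. f_equal. lia.
Qed.

Lemma ex_main : forall n t, 0 < t < 1 -> ex_series (fun k => (-1) ^ k * aR k n * t ^ k).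
Proof.
  intros n t Ht. exists (/ (1 - (- t)) ^ n).
  eapply is_series_ext. 2: apply main_series.
  - intros k; change (aR k n * (-t)^k = (-1)^k * aR k n * t^k). replace (- t) with (-1 * t) by ring. rewrite Rpow_mult_distr. ring.
  - rewrite Rabs_Ropp, Rabs_right; lra.
Qed.

Theorem mainTheorem11 :
  forall n : nat, abel_sum (fun k => (-1) ^ k * aR k n) (aL_expneg n).
Proof.
  intros n. split.
  - intros t Ht. apply ex_main; auto.
  - apply filterlim_ext_loc with (f := fun t => / (1 + t) ^ n).
    + exists (mkposreal _ Rlt_0_1). intros y Hy Hy1.
      cbv [ball AbsRing_ball abs minus plus opp] in Hy. simpl in Hy.
      apply Rabs_def2 in Hy.
      symmetry. apply is_series_unique.
      replace (1 + y) with (1 - - y) by ring.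
      eapply is_series_ext. 2: apply main_series.
      * intros k; change (aR k n * (-y)^k = (-1)^k * aR k n * y^k).
        replace (- y) with (-1 * y) by ring. rewrite Rpow_mult_distr. ring.
      * unfold minus, plus, opp in Hy; simpl in Hy. rewrite Rabs_Ropp, Rabs_right; lra.
    + unfold aL_expneg.
      replace 2 with (1 + 1) by ring.
      apply (filterlim_filter_le_1 (F := locally 1)).
      * intros P [e He]. exists e. intros y Hy _. apply He; auto.
      * apply (continuity_pt_filterlim (fun t => / (1 + t) ^ n)).
        apply continuity_pt_inv.
        -- apply derivable_continuous_pt. reg.
        -- apply pow_nonzero. lra.
Qed.
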